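(* Consider a system of miners and clients communicating by message passing, in which clients broadcast transactions to the miners inside protocol messages and transactions are recorded in blocks of a valid blockchain $BT$. Suppose a (Byzantine) miner $M$ executes a front-running attack: it reads an unconfirmed transaction $t_x$ (i.e., it delivers the message $m_x$ containing $t_x$) and afterwards broadcasts its own transaction $t_y$ (in a message $m_y$), and the attack succeeds, i.e., $t_y$ is recorded before $t_x$ in the consensus chain of $BT$. Then $t_x \rightarrow t_y$ (equivalently $m_x \rightarrow m_y$), and so recording $t_y$ before $t_x$ violates causal ordering (strong safety): a front-running attack is a violation of causal ordering.
   Context: Happens-before relation $\rightarrow$ on messages: (1) the set of messages delivered from any process $p_i$ by a process is totally ordered by $\rightarrow$; (2) if $p_i$ sent or delivered message $m$ before sending message $m'$, then $m\rightarrow m'$; (3) $\rightarrow$ is transitive. For transactions $t_1,t_2$ contained in messages $m_1,m_2$, $t_1\rightarrow t_2$ iff $m_1\rightarrow m_2$. The causal past $CP(t)$ of a transaction $t$ is the set of transactions $t'$ with $t'\rightarrow t$. Strong safety (causal ordering) for a blockchain $BT$ requires: for every transaction $t$ and every $t'\in CP(t)$, $t'$ is recorded in $BT$ before $t$; for messages it requires that for all $m'\in CP(m)$ sent to the same correct processes, no correct process delivers (consumes) $m$ before $m'$. A block contains a totally ordered sequence of transactions and the hash of its parent block; a blockchain is a tree of blocks; its consensus chain is a sequence of blocks $B_0,B_1,\dots,B_l$ from the genesis block with $B_k$ the parent of $B_{k+1}$, of maximal depth; $BT$ is valid if it has exactly one consensus chain. Transaction $t_y$ is recorded before $t_x$ in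 the consensus chain if it lies in an earlier block, or in the same block ordered before $t_x$. A front-running attack: a Byzantine miner reads an unconfirmed transaction $t_x$ and broadcasts/mines its own transaction $t_y$ with the intention of recording $t_y$ before $t_x$ in the consensus chain of a valid blockchain. *)

(* Defs.v *)
From Stdlib Require Import List Arith Lia.
Import ListNotations.
Set Implicit Arguments.

Inductive event (Msg : Type) : Type :=
| ESend : Msg -> event Msg
| EDeliver : Msg -> event Msg.
Arguments ESend {Msg} _.
Arguments EDeliver {Msg} _.

Definition occurs_before {A : Type} (l : list A) (e1 e2 : A) : Prop :=
  exists l1 l2 l3, l = l1 ++ e1 :: l2 ++ e2 :: l3.

Inductive hb {Proc Msg : Type} (hist : Proc -> list (event Msg))
    (sender : Msg -> Proc) : Msg -> Msg -> Prop :=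
| hb_deliv_order : forall (q : Proc) (m m' : Msg),
    sender m = sender m' ->
    occurs_before (hist q) (EDeliver m) (EDeliver m') ->
    hb hist sender m m'
| hb_send_after_send : forall (p : Proc) (m m' : Msg),
    occurs_before (hist p) (ESend m) (ESend m') -> hb hist sender m m'
| hb_send_after_deliver : forall (p : Proc) (m m' : Msg),
    occurs_before (hist p) (EDeliver m) (ESend m') -> hb hist sender m m'
| hb_trans : forall m1 m2 m3,
    hb hist sender m1 m2 -> hb hist sender m2 m3 -> hb hist sender m1 m3.

Definition hb_tx {Proc Msg Tx : Type} (hist : Proc -> list (event Msg))
    (sender : Msg -> Proc) (contains : Msg -> Tx -> Prop) (t1 t2 : Tx) : Prop :=
  exists m1 m2, contains m1 t1 /\ contains m2 t2 /\ hb hist sender m1 m2.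

Definition CP {Proc Msg Tx : Type} (hist : Proc -> list (event Msg))
    (sender : Msg -> Proc) (contains : Msg -> Tx -> Prop) (t : Tx) : Tx -> Prop :=
  fun t' => hb_tx hist sender contains t' t.

Record block (Tx Hash : Type) := mkBlock { btxs : list Tx ; bparent : Hash }.

Section Blockchain.
Variables (Tx Hash : Type) (hash : block Tx Hash -> Hash)
          (genesis : block Tx Hash).

(** A blockchain is a tree of blocks, given by its set of blocks [BT]
    (the tree structure is given by parent hashes). *)
Definition blocktree := list (block Tx Hash).

Definition is_chain (BT : blocktree) (c : list (block Tx Hash)) : Prop :=
  hd_error c = Some genesis /\
  (forall B, In B c -> In B BT) /\
  (forall k B B', nth_error c k = Some B -> nth_error c (S k) = Some B' ->
     bparent B' = hash B).

Definition consensus_chain (BT : blocktree) (c : list (block Tx Hash)) : Prop :=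
  is_chain BT c /\ forall c', is_chain BT c' -> length c' <= length c.

Definition valid (BT : blocktree) : Prop :=
  exists c, consensus_chain BT c /\ forall c', consensus_chain BT c' -> c' = c.

Definition recorded (BT : blocktree) (t : Tx) : Prop :=
  exists c, consensus_chain BT c /\ exists B, In B c /\ In t (btxs B).

Definition recorded_before (BT : blocktree) (ty tx : Tx) : Prop :=
  exists c, consensus_chain BT c /\
    exists k l Bk Bl, nth_error c k = Some Bk /\ nth_error c l = Some Bl /\
      ((k < l /\ In ty (btxs Bk) /\ In tx (btxs Bl)) \/
       (k = l /\ occurs_before (btxs Bk) ty tx)).

End Blockchain.

Definition strong_safety {Proc Msg Tx Hash : Type}
    (hist : Proc -> list (event Msg)) (sender : Msg -> Proc)
    (contains : Msg -> Tx -> Prop)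
    (hash : block Tx Hash -> Hash) (genesis : block Tx Hash)
    (BT : blocktree Tx Hash) : Prop :=
  forall t t', recorded hash genesis BT t ->
    CP hist sender contains t t' -> recorded_before hash genesis BT t' t.

(* Main.v *)
Require Import Defs.
From Stdlib Require Import List Arith Lia.
Import ListNotations.

Lemma ob_pos {A} (L : list A) a b : occurs_before L a b ->
  exists i j, i < j /\ nth_error L i = Some a /\ nth_error L j = Some b.
Proof.
  intros (l1 & l2 & l3 & ->).
  exists (length l1), (length l1 + S (length l2)). split; [lia|split].
  - rewrite nth_error_app2 by lia. rewrite Nat.sub_diag. reflexivity.
  - rewrite nth_error_app2 by lia. replace (length l1 + S (length l2) - length l1) with (S (length l2)) by lia.
    simpl. rewrite nth_error_app2 by lia. rewrite Nat.sub_diag. reflexivity.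
Qed.

Lemma ob_nodup {A} (L : list A) a b : NoDup L -> occurs_before L a b -> occurs_before L b a -> False.
Proof.
  intros HN H1 H2. apply ob_pos in H1 as (i&j&Hij&Hi&Hj).
  apply ob_pos in H2 as (i'&j'&Hij'&Hi'&Hj').
  pose proof (proj1 (NoDup_nth_error L) HN).
  assert (i = j') by (apply H; [apply nth_error_Some; congruence| congruence]).
  assert (j = i') by (apply H; [apply nth_error_Some; congruence| congruence]).
  lia.
Qed.

Lemma ob_app_l {A} (P L : list A) a b : occurs_before L a b -> occurs_before (P ++ L) a b.
Proof. intros (l1&l2&l3&->). exists (P ++ l1), l2, l3. now rewrite app_assoc. Qed.

Lemma ob_app_r {A} (L R : list A) a b : occurs_before L a b -> occurs_before (L ++ R) a b.
Proof. intros (l1&l2&l3&->). exists l1, l2, (l3 ++ R). repeat (rewrite <- app_assoc; simpl). reflexivity. Qed.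

Lemma rb_ob {Tx Hash} (c : list (block Tx Hash)) k l Bk Bl ty tx :
  nth_error c k = Some Bk -> nth_error c l = Some Bl ->
  ((k < l /\ In ty (btxs Bk) /\ In tx (btxs Bl)) \/
       (k = l /\ occurs_before (btxs Bk) ty tx)) ->
  occurs_before (concat (map (@btxs Tx Hash) c)) ty tx.
Proof.
  intros Hk Hl [(Hkl & Hy & Hx) | (-> & Hob)].
  - destruct (nth_error_split c k Hk) as (c1 & c2 & -> & Hlen).
    rewrite nth_error_app2 in Hl by lia.
    replace (l - length c1) with (S (l - length c1 - 1)) in Hl by lia. simpl in Hl.
    destruct (nth_error_split c2 _ Hl) as (c3 & c4 & -> & _).
    destruct (in_split _ _ Hy) as (a & b' & Ha).
    destruct (in_split _ _ Hx) as (d & e & Hd).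
    rewrite map_app, concat_app. apply ob_app_l. simpl. rewrite map_app, concat_app. simpl.
    rewrite Ha, Hd.
    exists a, (b' ++ concat (map (@btxs Tx Hash) c3) ++ d), (e ++ concat (map (@btxs Tx Hash) c4)).
    repeat (rewrite <- app_assoc; simpl). reflexivity.
  - destruct (nth_error_split c l Hk) as (c1 & c2 & -> & _).
    rewrite map_app, concat_app. apply ob_app_l. simpl. apply ob_app_r. exact Hob.
Qed.

Theorem theorem1 (Proc Msg Tx Hash : Type)
    (hist : Proc -> list (event Msg)) (sender : Msg -> Proc)
    (contains : Msg -> Tx -> Prop)
    (hash : block Tx Hash -> Hash) (genesis : block Tx Hash)
    (BT : blocktree Tx Hash)
    (M : Proc) (mx my : Msg) (tx ty : Tx) :
  valid hash genesis BT ->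
  (* each transaction is recorded at most once in the consensus chain *)
  (forall c, consensus_chain hash genesis BT c -> NoDup (concat (map (@btxs Tx Hash) c))) ->
  contains mx tx ->
  contains my ty ->
  (* M reads t_x (delivers m_x) and afterwards broadcasts t_y in m_y *)
  occurs_before (hist M) (EDeliver mx) (ESend my) ->
  (* the attack succeeds *)
  recorded_before hash genesis BT ty tx ->
  hb_tx hist sender contains tx ty /\ hb hist sender mx my /\
  ~ strong_safety hist sender contains hash genesis BT.
Proof.
  intros Hval Hnd Hx Hy Hob Hrb.
  assert (Hhb : hb hist sender mx my) by (eapply hb_send_after_deliver; exact Hob).
  assert (Htx : hb_tx hist sender contains tx ty) by (exists mx, my; auto).
  split; [exact Htx | split; [exact Hhb|]].
  intros Hss.
  destruct Hrb as (c & Hc & k & l & Bk & Bl & Hk & Hl & Hor).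
  assert (Hrec : recorded hash genesis BT ty).
  { exists c. split; [exact Hc|]. exists Bk. split.
    - eapply nth_error_In; exact Hk.
    - destruct Hor as [(_&H&_)|(_&(l1&l2&l3&E))].
      + exact H.
      + rewrite E. apply in_or_app. right. left. reflexivity. }
  specialize (Hss ty tx Hrec Htx).
  destruct Hss as (c' & Hc' & k' & l' & Bk' & Bl' & Hk' & Hl' & Hor').
  destruct Hval as (c0 & Hc0 & Huniq).
  assert (c = c0) by (apply Huniq; exact Hc).
  assert (c' = c0) by (apply Huniq; exact Hc'). subst.
  eapply (ob_nodup _ ty tx (Hnd _ Hc)).
  - eapply rb_ob; [exact Hk|exact Hl|exact Hor].
  - eapply rb_ob; [exact Hk'|exact Hl'|exact Hor'].
Qed.
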